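(* There is $R_1\in(0,\frac12\sqrt{\frac{3}{8\pi}})$ such that for all $0<R<R_1$ and all $(m_1,\rho_1),(m_2,\rho_2)\in\mathcal{C}^0_R$, $$\|T[m_1,\rho_1]-T[m_2,\rho_2]\|\le\frac34\,\|(m_1-m_2,\rho_1-\rho_2)\|.$$
   Context: Let $\rho_*(R)=\frac{16\pi}{3}R^2$ and $\mathcal{C}^0_R=\{(m,\rho):[0,R]\to\mathbb{R}^2 \text{ continuous}:\ 0\le m(r)\le \frac{4\pi}{3}\rho_*(R)r^3,\ 0\le\rho(r)\le\rho_*(R)\}$, with norm $\|(m,\rho)\|=\frac{3}{4\pi}\|m/r^3\|_{L^\infty}+2\|\rho\|_{L^\infty}$. Define $T[m,\rho]=(M[\rho],P[m,\rho])$ with $M[\rho](r)=\int_0^r 4\pi s^2\rho(s)\,ds$ and $P[m,\rho](r)=\int_r^R \frac{1+2\rho(s)}{1-\frac{8\pi}{3}s^2-\frac{2m(s)}{s}}\,\frac{4\pi s}{3}\Big[1+3\rho(s)+\frac{3m(s)}{4\pi s^3}\Big]ds$. *)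

(* Defs.v *)
From Stdlib Require Import Reals Lra ClassicalEpsilon.
Open Scope R_scope.

(* Total Riemann integral: value of the Riemann integral of f on [a,b]
   when f is Riemann integrable there, 0 otherwise. *)
Definition Rint (f : R -> R) (a b : R) : R :=
  match excluded_middle_informative
          (exists l, exists pr : Riemann_integrable f a b, RiemannInt pr = l) with
  | left H => proj1_sig (constructive_indefinite_description _ H)
  | right _ => 0
  end.

(* sup of |f| over the set D (least upper bound if it exists, else 0). *)
Definition sup_abs (D : R -> Prop) (f : R -> R) : R :=
  match excluded_middle_informative
          (exists l, is_lub (fun y => exists r, D r /\ y = Rabs (f r)) l) with
  | left H => proj1_sig (constructive_indefinite_description _ H)
  | right _ => 0
  end.

Definition continuous_on (a b : R) (f : R -> R) : Prop :=
  forall x, a <= x <= b -> forall eps, 0 < eps -> exists delta, 0 < delta /\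
    forall y, a <= y <= b -> Rabs (y - x) < delta -> Rabs (f y - f x) < eps.

Definition rho_star (R0 : R) : R := 16 * PI / 3 * R0 ^ 2.

Definition inC (R0 : R) (m rho : R -> R) : Prop :=
  continuous_on 0 R0 m /\ continuous_on 0 R0 rho /\
  forall r, 0 <= r <= R0 ->
    0 <= m r <= 4 * PI / 3 * rho_star R0 * r ^ 3 /\ 0 <= rho r <= rho_star R0.

Definition normC (R0 : R) (m rho : R -> R) : R :=
  3 / (4 * PI) * sup_abs (fun r => 0 < r <= R0) (fun r => m r / r ^ 3)
  + 2 * sup_abs (fun r => 0 <= r <= R0) rho.

Definition Mop (rho : R -> R) (r : R) : R :=
  Rint (fun s => 4 * PI * s ^ 2 * rho s) 0 r.

Definition Pop (R0 : R) (m rho : R -> R) (r : R) : R :=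
  Rint (fun s => (1 + 2 * rho s) / (1 - 8 * PI / 3 * s ^ 2 - 2 * m s / s)
                 * (4 * PI * s / 3)
                 * (1 + 3 * rho s + 3 * m s / (4 * PI * s ^ 3))) r R0.

(* Main.v *)
Require Import Defs.
From Stdlib Require Import Reals Lra Psatz ClassicalEpsilon.
From Coquelicot Require Import Coquelicot.
Open Scope R_scope.

Lemma Rint_RInt f a b : ex_RInt f a b -> Rint f a b = RInt f a b.
Proof.
  intros Hex. pose proof (ex_RInt_Reals_0 _ _ _ Hex) as pr.
  unfold Rint. destruct (excluded_middle_informative _) as [H|H].
  - destruct (constructive_indefinite_description _ H) as [l [pr' Hl]]; simpl.
    rewrite (RInt_Reals f a b pr'). auto.
  - exfalso; apply H. exists (RiemannInt pr), pr. auto.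
Qed.

Lemma sup_le D f K : 0 <= K -> (forall r, D r -> Rabs (f r) <= K) -> sup_abs D f <= K.
Proof.
  intros HK H. unfold sup_abs. destruct (excluded_middle_informative _) as [E|E]; auto.
  destruct (constructive_indefinite_description _ E) as [l Hl]; simpl.
  apply Hl. intros y [r [Dr ->]]. auto.
Qed.

Lemma le_sup D f K r : (forall r, D r -> Rabs (f r) <= K) -> D r -> Rabs (f r) <= sup_abs D f.
Proof.
  intros H Dr. unfold sup_abs. destruct (excluded_middle_informative _) as [E|E].
  - destruct (constructive_indefinite_description _ E) as [l Hl]; simpl.
    apply Hl. exists r; auto.
  - exfalso; apply E.
    destruct (completeness (fun y => exists r, D r /\ y = Rabs (f r))) as [l Hl].
    + exists K. intros y [r' [Dr' ->]]. auto.
    + exists (Rabs (f r)), r; auto.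
    + exists l; auto.
Qed.

Definition clamp R0 x := Rmax 0 (Rmin x R0).

Lemma clamp_in R0 x : 0 <= R0 -> 0 <= clamp R0 x <= R0.
Proof. intros; unfold clamp, Rmax, Rmin; repeat destruct Rle_dec; lra. Qed.
Lemma clamp_id R0 x : 0 <= x <= R0 -> clamp R0 x = x.
Proof. intros; unfold clamp, Rmax, Rmin; repeat destruct Rle_dec; lra. Qed.
Lemma clamp_lip R0 x y : 0 <= R0 -> Rabs (clamp R0 y - clamp R0 x) <= Rabs (y - x).
Proof. intros; unfold clamp, Rmax, Rmin; repeat destruct Rle_dec; unfold Rabs; repeat destruct Rcase_abs; lra. Qed.
Lemma clamp_nonpos R0 x : 0 <= R0 -> x <= 0 -> clamp R0 x = 0.
Proof. intros; unfold clamp, Rmax, Rmin; repeat destruct Rle_dec; lra. Qed.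

Lemma cont_clamp R0 u : 0 <= R0 -> Defs.continuous_on 0 R0 u ->
  forall x, continuous (fun y => u (clamp R0 y)) x.
Proof.
  intros H0 Hu x. apply continuity_pt_filterlim.
  unfold continuity_pt, continue_in, limit1_in, limit_in; simpl; unfold R_dist.
  intros eps Heps.
  destruct (Hu (clamp R0 x) (clamp_in R0 x H0) eps Heps) as [d [Hd Hy]].
  exists d; split; auto. intros y [_ Hyx].
  apply Hy. apply clamp_in; auto.
  eapply Rle_lt_trans; [apply clamp_lip; auto | auto].
Qed.

Lemma cont_clamp_id R0 x : 0 <= R0 -> continuous (fun y => clamp R0 y) x.
Proof.
  intros H0. apply (cont_clamp R0 (fun y => y) H0).
  intros z _ eps Heps. exists eps; split; auto.
Qed.

Lemma cmul (f g : R -> R) x : continuous f x -> continuous g x -> continuous (fun y => f y * g y) x.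
Proof. intros; apply (continuous_mult f g x); auto. Qed.
Lemma cplus (f g : R -> R) x : continuous f x -> continuous g x -> continuous (fun y => f y + g y) x.
Proof. intros; apply (continuous_plus f g x); auto. Qed.
Lemma cminus (f g : R -> R) x : continuous f x -> continuous g x -> continuous (fun y => f y - g y) x.
Proof. intros; apply (continuous_minus f g x); auto. Qed.
Lemma cdiv (f g : R -> R) x : continuous f x -> continuous g x -> g x <> 0 -> continuous (fun y => f y / g y) x.
Proof. intros; apply cmul; auto. apply continuous_Rinv_comp; auto. Qed.
Lemma cpow (f : R -> R) n x : continuous f x -> continuous (fun y => f y ^ n) x.
Proof. intros; induction n; simpl. apply continuous_const. apply cmul; auto. Qed.
Lemma cconst (c x : R) : continuous (fun _ : R => c) x.
Proof. apply continuous_const. Qed.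
Lemma cid (x : R) : continuous (fun y : R => y) x.
Proof. apply continuous_id. Qed.


Definition g p s r u := (1+2*r)*(4*p/3*(1+3*r)+u)/(1-(8*p/3+2*u)*s^2).

Lemma D_bnd p s u : 3 < p <= 4 -> 0 <= s <= 1/100 -> 0 <= u <= 1/100 ->
  99/100 <= 1-(8*p/3+2*u)*s^2 <= 1.
Proof.
  intros Hp Hs Hu. assert (0 <= s^2 <= 1/10000) by (split; nra).
  split; nra.
Qed.

Lemma P_bnd p r u : 3 < p <= 4 -> 0 <= r <= 1/100 -> 0 <= u <= 1/100 ->
  0 <= (1+2*r)*(4*p/3*(1+3*r)+u) <= 7.
Proof. intros. assert (0 <= 4*p/3*(1+3*r)+u <= 6) by nra.
  split. apply Rmult_le_pos; lra.
  apply Rle_trans with ((1+2*r)*6). apply Rmult_le_compat_l; lra. lra. Qed.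

Lemma g_bnd p s r u : 3 < p <= 4 -> 0 <= s <= 1/100 -> 0 <= r <= 1/100 -> 0 <= u <= 1/100 ->
  Rabs (g p s r u) <= 10.
Proof.
  intros Hp Hs Hr Hu. pose proof (D_bnd p s u Hp Hs Hu). pose proof (P_bnd p r u Hp Hr Hu).
  unfold g. set (D := 1-(8*p/3+2*u)*s^2) in *. set (P := (1+2*r)*(4*p/3*(1+3*r)+u)) in *.
  rewrite Rabs_pos_eq.
  - apply Rmult_le_reg_r with D; [lra|]. unfold Rdiv. rewrite Rmult_assoc, Rinv_l by lra. nra.
  - apply Rmult_le_pos; [lra|]. left; apply Rinv_0_lt_compat; lra.
Qed.

Lemma g_lip p s r1 u1 r2 u2 : 3 < p <= 4 -> 0 <= s <= 1/100 ->
  0 <= r1 <= 1/100 -> 0 <= u1 <= 1/100 -> 0 <= r2 <= 1/100 -> 0 <= u2 <= 1/100 ->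
  Rabs (g p s r1 u1 - g p s r2 u2) <= 40 * Rabs (r1 - r2) + 2 * Rabs (u1 - u2).
Proof.
  intros Hp Hs Hr1 Hu1 Hr2 Hu2.
  pose proof (D_bnd p s u1 Hp Hs Hu1). pose proof (D_bnd p s u2 Hp Hs Hu2).
  pose proof (P_bnd p r2 u2 Hp Hr2 Hu2).
  assert (Hs2 : 0 <= s^2 <= 1/10000) by (split; nra).
  set (D1 := 1-(8*p/3+2*u1)*s^2) in *. set (D2 := 1-(8*p/3+2*u2)*s^2) in *.
  set (P2 := (1+2*r2)*(4*p/3*(1+3*r2)+u2)) in *.
  set (A1 := (4*p/3*(5+6*(r1+r2)) + 2*u2) * D2).
  set (A2 := (1+2*r1)*D2 + P2*2*s^2).
  assert (HA1 : 0 <= A1 <= 28). { unfold A1. assert (0 <= 4*p/3*(5+6*(r1+r2)) + 2*u2 <= 28).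
    { assert (0 <= (16/3 - 4*p/3)*(5+6*(r1+r2))) by (apply Rmult_le_pos; lra).
      assert (0 <= (4*p/3)*(5+6*(r1+r2))) by (apply Rmult_le_pos; lra). nra. }
    split. apply Rmult_le_pos; lra.
    assert (0 <= (4*p/3*(5+6*(r1+r2)) + 2*u2) * (1 - D2)) by (apply Rmult_le_pos; lra). nra. }
  assert (HA2 : 0 <= A2 <= 11/10). { unfold A2. assert (0 <= P2*2*s^2 <= 7*2*(1/10000)).
    { rewrite Rmult_assoc. split. apply Rmult_le_pos; lra.
      apply Rle_trans with (7*(2*s^2)); [apply Rmult_le_compat_r; lra | lra]. }
    assert (0 <= (1+2*r1)*D2 <= 102/100).
    { split. apply Rmult_le_pos; lra.
      apply Rle_trans with ((1+2*r1)*1). apply Rmult_le_compat_l; lra. lra. }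
    lra. }
  assert (E : g p s r1 u1 - g p s r2 u2 = ((r1-r2)*A1 + (u1-u2)*A2) / (D1*D2)).
  { unfold g, A1, A2, P2, D1, D2. field. split; unfold D1, D2 in *; lra. }
  rewrite E. unfold Rdiv. rewrite Rabs_mult. rewrite (Rabs_pos_eq (/ _)).
  2:{ left; apply Rinv_0_lt_compat; nra. }
  assert (HX : Rabs ((r1-r2)*A1 + (u1-u2)*A2) <= 28 * Rabs (r1-r2) + 11/10 * Rabs (u1-u2)).
  { eapply Rle_trans; [apply Rabs_triang|]. rewrite !Rabs_mult.
    rewrite (Rabs_pos_eq A1), (Rabs_pos_eq A2) by lra.
    pose proof (Rabs_pos (r1-r2)); pose proof (Rabs_pos (u1-u2)). nra. }
  assert (HY : 0 < / (D1*D2) <= 100/98).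
  { split. apply Rinv_0_lt_compat; nra.
    apply Rmult_le_reg_r with (D1*D2); [nra|]. rewrite Rinv_l by nra. nra. }
  pose proof (Rabs_pos (r1-r2)); pose proof (Rabs_pos (u1-u2)).
  pose proof (Rabs_pos ((r1-r2)*A1 + (u1-u2)*A2)).
  nra.
Qed.

Ltac cont1 := match goal with
 | |- continuous (fun _ => ?c) _ => apply cconst
 | |- continuous (fun y => y) _ => apply cid
 | |- continuous (fun y => @?f y / @?g y) _ => apply (cdiv f g)
 | |- continuous (fun y => @?f y * @?g y) _ => apply (cmul f g)
 | |- continuous (fun y => @?f y + @?g y) _ => apply (cplus f g)
 | |- continuous (fun y => @?f y - @?g y) _ => apply (cminus f g)
 | |- continuous (fun y => @?f y ^ ?n) _ => apply (cpow f n)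
 | |- continuous _ _ => assumption
end.
Ltac cont := repeat cont1.

Definition Fm (rho : R -> R) s := 4 * PI * s ^ 2 * rho s.
Definition Fp (m rho : R -> R) s := (1 + 2 * rho s) / (1 - 8 * PI / 3 * s ^ 2 - 2 * m s / s)
                 * (4 * PI * s / 3)
                 * (1 + 3 * rho s + 3 * m s / (4 * PI * s ^ 3)).

Lemma ex_Fm R0 rho r : 0 < R0 -> Defs.continuous_on 0 R0 rho -> 0 <= r <= R0 -> ex_RInt (Fm rho) 0 r.
Proof.
  intros H0 Hc Hr.
  apply ex_RInt_ext with (f := fun x => 4 * PI * x ^ 2 * rho (clamp R0 x)).
  - intros x Hx. rewrite Rmin_left in Hx by lra. rewrite Rmax_right in Hx by lra.
    unfold Fm. rewrite clamp_id; lra.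
  - apply (ex_RInt_continuous (V:=R_CompleteNormedModule)). intros z _.
    pose proof (cont_clamp R0 rho (Rlt_le _ _ H0) Hc z).
    cont.
Qed.

Lemma PI_bnd : 3 < PI <= 4.
Proof. pose proof PI2_3_2; pose proof PI_4; lra. Qed.

Lemma star_bnd R0 : 0 < R0 <= 1/200 -> 0 <= rho_star R0 <= 1/100 /\ 0 <= 4*PI/3*rho_star R0 <= 1/100.
Proof.
  intros HR. pose proof PI_bnd. unfold rho_star.
  assert (0 <= R0^2 <= 1/40000) by (split; nra).
  assert (0 <= 16*PI/3*R0^2 <= 1/1000) by (split; nra).
  split; split; nra.
Qed.

Lemma u_bnd R0 m rho s : 0 < R0 <= 1/200 -> inC R0 m rho -> 0 < s <= R0 ->
  0 <= m s / s^3 <= 1/100 /\ 0 <= rho s <= 1/100.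
Proof.
  intros HR [_ [_ H]] Hs. destruct (H s ltac:(lra)) as [Hm Hr].
  destruct (star_bnd R0 HR) as [H1 H2].
  assert (0 < s^3) by (apply pow_lt; lra).
  split; [|lra]. split.
  - apply Rmult_le_pos; [lra|]. left; apply Rinv_0_lt_compat; lra.
  - apply Rle_trans with (4 * PI / 3 * rho_star R0 * s ^ 3 / s^3).
    + apply Rmult_le_compat_r; [left; apply Rinv_0_lt_compat; lra | lra].
    + replace (4 * PI / 3 * rho_star R0 * s ^ 3 / s^3) with (4 * PI / 3 * rho_star R0) by (field; lra). lra.
Qed.

Lemma Fp_g m rho s : 0 < s <= 1/100 -> 0 <= m s / s^3 <= 1/100 ->
  Fp m rho s = s * g PI s (rho s) (m s / s^3).
Proof.
  intros Hs Hu. pose proof PI_bnd.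
  set (u := m s / s^3) in *.
  pose proof (D_bnd PI s u PI_bnd ltac:(lra) Hu).
  assert (Em : m s = u * s^3) by (unfold u; field; lra).
  unfold Fp, g. rewrite Em.
  replace (2 * (u * s ^ 3) / s) with (2*u*s^2) by (field; lra).
  field. repeat split; lra.
Qed.

Lemma Fp0 m rho : Fp m rho 0 = 0.
Proof. unfold Fp. replace (4 * PI * 0 / 3) with 0 by field. ring. Qed.

Lemma Fp_bnd R0 m rho s : 0 < R0 <= 1/200 -> inC R0 m rho -> 0 <= s <= R0 ->
  Rabs (Fp m rho s) <= 10 * s.
Proof.
  intros HR HC Hs. destruct (Req_dec s 0) as [->|Hs0].
  - rewrite Fp0, Rabs_R0. lra.
  - destruct (u_bnd R0 m rho s HR HC ltac:(lra)) as [Hu Hr].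
    rewrite Fp_g by lra. rewrite Rabs_mult, Rabs_pos_eq by lra.
    pose proof (g_bnd PI s (rho s) (m s / s^3) PI_bnd ltac:(lra) Hr Hu). nra.
Qed.

Lemma ex_Fp R0 m rho r : 0 < R0 <= 1/200 -> inC R0 m rho -> 0 <= r <= R0 -> ex_RInt (Fp m rho) r R0.
Proof.
  intros HR HC Hr.
  apply ex_RInt_ext with (f := fun x => Fp m rho (clamp R0 x)).
  - intros x Hx. rewrite Rmin_left in Hx by lra. rewrite Rmax_right in Hx by lra.
    rewrite clamp_id; lra.
  - apply (ex_RInt_continuous (V:=R_CompleteNormedModule)). intros z _.
    destruct (Rle_dec z 0) as [Hz|Hz].
    + apply continuity_pt_filterlim.
      unfold continuity_pt, continue_in, limit1_in, limit_in; simpl; unfold R_dist.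
      intros eps Heps. exists (eps/10); split; [lra|]. intros y [_ Hy].
      rewrite (clamp_nonpos R0 z) by lra. rewrite Fp0, Rminus_0_r.
      pose proof (clamp_in R0 y ltac:(lra)).
      eapply Rle_lt_trans; [apply (Fp_bnd R0 m rho); auto|].
      pose proof (clamp_lip R0 z y ltac:(lra)). rewrite (clamp_nonpos R0 z) in H0 by lra.
      rewrite Rminus_0_r, Rabs_pos_eq in H0 by lra. lra.
    + destruct HC as [Hm [Hrho HC']].
      pose proof (cont_clamp R0 m ltac:(lra) Hm z).
      pose proof (cont_clamp R0 rho ltac:(lra) Hrho z).
      pose proof (cont_clamp_id R0 z ltac:(lra)).
      pose proof (clamp_in R0 z ltac:(lra)).
      assert (Hc : 0 < clamp R0 z).
      { unfold clamp, Rmax, Rmin in *; repeat destruct Rle_dec; lra. }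
      destruct (u_bnd R0 m rho (clamp R0 z) HR (conj Hm (conj Hrho HC')) ltac:(lra)) as [Hu _].
      set (c := clamp R0 z) in *.
      pose proof PI_bnd.
      pose proof (D_bnd PI c (m c / c^3) PI_bnd ltac:(lra) Hu).
      assert (0 < c^3) by (apply pow_lt; lra).
      assert (ED : 1 - 8 * PI / 3 * c ^ 2 - 2 * m c / c = 1 - (8 * PI / 3 + 2 * (m c / c^3)) * c^2)
        by (field; lra).
      unfold Fp. cont; fold c; try lra; try (rewrite ED; lra).
      apply Rgt_not_eq. assert (0 < 4*PI) by lra. apply Rmult_lt_0_compat; lra.
Qed.

Lemma Fp_diff R0 m1 rho1 m2 rho2 a b s : 0 < R0 <= 1/200 -> inC R0 m1 rho1 -> inC R0 m2 rho2 ->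
  0 <= a -> 0 <= b -> 0 <= s <= R0 ->
  Rabs (rho1 s - rho2 s) <= b -> (0 < s -> Rabs ((m1 s - m2 s) / s^3) <= a) ->
  Rabs (Fp m1 rho1 s - Fp m2 rho2 s) <= R0 * (40 * b + 2 * a).
Proof.
  intros HR H1 H2 Ha Hb Hs Hrb Hma.
  destruct (Req_dec s 0) as [->|Hs0].
  - rewrite !Fp0, Rminus_0_r, Rabs_R0. apply Rmult_le_pos; lra.
  - destruct (u_bnd R0 m1 rho1 s HR H1 ltac:(lra)) as [Hu1 Hr1].
    destruct (u_bnd R0 m2 rho2 s HR H2 ltac:(lra)) as [Hu2 Hr2].
    rewrite !Fp_g by lra. rewrite <- Rmult_minus_distr_l, Rabs_mult, (Rabs_pos_eq s) by lra.
    pose proof (g_lip PI s _ _ _ _ PI_bnd ltac:(lra) Hr1 Hu1 Hr2 Hu2).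
    assert (E : m1 s / s^3 - m2 s / s^3 = (m1 s - m2 s) / s^3) by (unfold Rdiv; ring).
    rewrite E in H. specialize (Hma ltac:(lra)).
    apply Rmult_le_compat; try lra. apply Rabs_pos.
Qed.

Lemma RInt_diff_le (f1 f2 G : R -> R) a b : a <= b -> ex_RInt f1 a b -> ex_RInt f2 a b -> ex_RInt G a b ->
  (forall x, a < x < b -> f1 x - f2 x <= G x) -> RInt f1 a b - RInt f2 a b <= RInt G a b.
Proof.
  intros Hab E1 E2 EG H.
  assert (Em : RInt (fun x => f1 x - f2 x) a b = RInt f1 a b - RInt f2 a b).
  { apply (RInt_minus (V:=R_CompleteNormedModule)); auto. }
  rewrite <- Em. apply RInt_le; auto.
  apply (ex_RInt_minus (V:=R_NormedModule)); auto.
Qed.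

Lemma RInt_sq (c r : R) : RInt (fun x => c * x^2) 0 r = c * r^3 / 3.
Proof.
  assert (H : is_RInt (fun x => c * x^2) 0 r (minus (c * r^3/3) (c * 0^3/3))).
  { apply (is_RInt_derive (V:=R_CompleteNormedModule) (fun x => c * x^3/3)).
    - intros x _. auto_derive; auto. field.
    - intros x _. cont. }
  apply (is_RInt_unique (V:=R_CompleteNormedModule)) in H. rewrite H. unfold minus, plus, opp; simpl. field.
Qed.

Lemma Mop_diff R0 rho1 rho2 b r : 0 < R0 -> Defs.continuous_on 0 R0 rho1 -> Defs.continuous_on 0 R0 rho2 ->
  (forall s, 0 <= s <= R0 -> Rabs (rho1 s - rho2 s) <= b) -> 0 < r <= R0 ->
  Rabs (Mop rho1 r - Mop rho2 r) <= 4 * PI / 3 * r^3 * b.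
Proof.
  intros H0 C1 C2 Hb Hr.
  change (Mop rho1 r) with (Rint (Fm rho1) 0 r). change (Mop rho2 r) with (Rint (Fm rho2) 0 r).
  pose proof (ex_Fm R0 rho1 r H0 C1 ltac:(lra)). pose proof (ex_Fm R0 rho2 r H0 C2 ltac:(lra)).
  rewrite !Rint_RInt by auto.
  pose proof PI_bnd.
  assert (EG : ex_RInt (fun x => (4*PI*b) * x^2) 0 r).
  { apply (ex_RInt_continuous (V:=R_CompleteNormedModule)). intros; cont. }
  assert (ES : RInt (fun x => (4*PI*b) * x^2) 0 r = 4 * PI / 3 * r^3 * b).
  { rewrite RInt_sq. change (4*PI*b*r^3/3 = 4*PI/3*r^3*b). field. }
  rewrite <- ES.
  apply Rabs_le; split.
  - cut (RInt (Fm rho2) 0 r - RInt (Fm rho1) 0 r <= RInt (fun x => (4*PI*b) * x^2) 0 r). lra.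
    apply RInt_diff_le; auto; try lra. intros x Hx. unfold Fm.
    specialize (Hb x ltac:(lra)). apply Rabs_le_between in Hb.
    assert (0 <= 4*PI*x^2) by (pose proof (pow2_ge_0 x); nra). nra.
  - apply RInt_diff_le; auto; try lra. intros x Hx. unfold Fm.
    specialize (Hb x ltac:(lra)). apply Rabs_le_between in Hb.
    assert (0 <= 4*PI*x^2) by (pose proof (pow2_ge_0 x); nra). nra.
Qed.

Lemma Pop_diff R0 m1 rho1 m2 rho2 a b r : 0 < R0 <= 1/200 -> inC R0 m1 rho1 -> inC R0 m2 rho2 ->
  0 <= a -> 0 <= b ->
  (forall s, 0 <= s <= R0 -> Rabs (rho1 s - rho2 s) <= b) ->
  (forall s, 0 < s <= R0 -> Rabs ((m1 s - m2 s) / s^3) <= a) -> 0 <= r <= R0 ->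
  Rabs (Pop R0 m1 rho1 r - Pop R0 m2 rho2 r) <= R0^2 * (40 * b + 2 * a).
Proof.
  intros HR H1 H2 Ha Hb Hrb Hma Hr.
  change (Pop R0 m1 rho1 r) with (Rint (Fp m1 rho1) r R0).
  change (Pop R0 m2 rho2 r) with (Rint (Fp m2 rho2) r R0).
  pose proof (ex_Fp R0 m1 rho1 r HR H1 Hr). pose proof (ex_Fp R0 m2 rho2 r HR H2 Hr).
  rewrite !Rint_RInt by auto.
  assert (Em : RInt (fun x => Fp m1 rho1 x - Fp m2 rho2 x) r R0 = RInt (Fp m1 rho1) r R0 - RInt (Fp m2 rho2) r R0).
  { apply (RInt_minus (V:=R_CompleteNormedModule)); auto. }
  rewrite <- Em.
  eapply Rle_trans.
  - apply abs_RInt_le_const with (M := R0 * (40 * b + 2 * a)); try lra.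
    + apply (ex_RInt_minus (V:=R_NormedModule)); auto.
    + intros t Ht. apply (Fp_diff R0 m1 rho1 m2 rho2 a b t HR H1 H2 Ha Hb); [lra | apply Hrb; lra | intros; apply Hma; lra].
  - assert (0 <= R0 * (40 * b + 2 * a)) by (apply Rmult_le_pos; lra).
    replace (R0^2) with (R0*R0) by ring. rewrite Rmult_assoc.
    apply Rmult_le_compat_r; lra.
Qed.

Lemma R1_ok : 0 < 1/200 < / 2 * sqrt (3 / (8 * PI)).
Proof.
  pose proof PI_bnd. split; [lra|].
  assert (Hs : sqrt (1/10000) = 1/100).
  { replace (1/10000) with ((1/100)^2) by field. apply sqrt_pow2. lra. }
  assert (1/10000 < 3 / (8*PI)).
  { apply Rmult_lt_reg_r with (8*PI); [lra|]. replace (3/(8*PI)*(8*PI)) with 3 by (field; lra). lra. }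
  pose proof (sqrt_lt_1_alt (1/10000) (3/(8*PI)) ltac:(lra)). lra.
Qed.

Theorem mainTheorem3 :
  exists R1 : R, 0 < R1 < / 2 * sqrt (3 / (8 * PI)) /\
    forall R0 : R, 0 < R0 < R1 ->
    forall m1 rho1 m2 rho2 : R -> R,
      inC R0 m1 rho1 -> inC R0 m2 rho2 ->
      normC R0 (fun r => Mop rho1 r - Mop rho2 r)
               (fun r => Pop R0 m1 rho1 r - Pop R0 m2 rho2 r)
      <= 3 / 4 * normC R0 (fun r => m1 r - m2 r) (fun r => rho1 r - rho2 r).
Proof.
  exists (1/200). split; [apply R1_ok|].
  intros R0 HR0 m1 rho1 m2 rho2 H1 H2.
  assert (HR : 0 < R0 <= 1/200) by lra.
  pose proof PI_bnd.
  unfold normC; cbv beta.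
  set (a := sup_abs (fun r => 0 < r <= R0) (fun r => (m1 r - m2 r) / r ^ 3)).
  set (b := sup_abs (fun r => 0 <= r <= R0) (fun r => rho1 r - rho2 r)).
  assert (Ha : forall s, 0 < s <= R0 -> Rabs ((m1 s - m2 s) / s^3) <= a).
  { intros s Hs. apply (le_sup (fun r => 0 < r <= R0) (fun r => (m1 r - m2 r) / r ^ 3) (1/50) s); auto. intros r Hr.
    destruct (u_bnd R0 m1 rho1 r HR H1 Hr) as [Hu1 _].
    destruct (u_bnd R0 m2 rho2 r HR H2 Hr) as [Hu2 _].
    replace ((m1 r - m2 r) / r^3) with (m1 r / r^3 - m2 r / r^3) by (unfold Rdiv; ring).
    apply Rabs_le; lra. }
  assert (Hb : forall s, 0 <= s <= R0 -> Rabs (rho1 s - rho2 s) <= b).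
  { intros s Hs. apply (le_sup (fun r => 0 <= r <= R0) (fun r => rho1 r - rho2 r) (1/50) s); auto. intros r Hr.
    destruct H1 as [_ [_ K1]]. destruct H2 as [_ [_ K2]].
    destruct (K1 r Hr) as [_ L1]. destruct (K2 r Hr) as [_ L2].
    destruct (star_bnd R0 HR) as [S1 _].
    apply Rabs_le; lra. }
  assert (Ha0 : 0 <= a) by (eapply Rle_trans; [apply Rabs_pos | apply (Ha R0); lra]).
  assert (Hb0 : 0 <= b) by (eapply Rle_trans; [apply Rabs_pos | apply (Hb R0); lra]).
  assert (SM : sup_abs (fun r => 0 < r <= R0) (fun r => (Mop rho1 r - Mop rho2 r) / r ^ 3) <= 4*PI/3*b).
  { apply sup_le. apply Rmult_le_pos; lra. intros r Hr.
    assert (0 < r^3) by (apply pow_lt; lra).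
    pose proof (Mop_diff R0 rho1 rho2 b r ltac:(lra) (proj1 (proj2 H1)) (proj1 (proj2 H2)) Hb Hr).
    unfold Rdiv. rewrite Rabs_mult, (Rabs_pos_eq (/ r^3)) by (left; apply Rinv_0_lt_compat; lra).
    apply Rmult_le_reg_r with (r^3); [lra|]. rewrite Rmult_assoc, Rinv_l by lra. lra. }
  assert (SP : sup_abs (fun r => 0 <= r <= R0) (fun r => Pop R0 m1 rho1 r - Pop R0 m2 rho2 r)
               <= R0^2 * (40 * b + 2 * a)).
  { apply sup_le. apply Rmult_le_pos; [apply pow2_ge_0 | lra]. intros r Hr.
    apply Pop_diff; auto. }
  assert (HR2 : 0 <= R0^2 <= 1/40000) by (split; nra).
  assert (Hk : 0 < 3 / (4 * PI)) by (apply Rdiv_lt_0_compat; lra).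
  assert (Hk1 : 3 / (4 * PI) * (4*PI/3*b) = b) by (field; lra).
  assert (Hk2 : 3/16 <= 3 / (4 * PI)).
  { apply Rmult_le_reg_r with (4*PI); [lra|]. replace (3/(4*PI)*(4*PI)) with 3 by (field; lra). lra. }
  assert (T1 : 3 / (4 * PI) * sup_abs (fun r => 0 < r <= R0) (fun r => (Mop rho1 r - Mop rho2 r) / r ^ 3) <= b).
  { rewrite <- Hk1. apply Rmult_le_compat_l; lra. }
  assert (R0^2 * (40 * b + 2 * a) <= (40*b + 2*a)/40000).
  { apply Rle_trans with (1/40000 * (40 * b + 2 * a)). apply Rmult_le_compat_r; lra. lra. }
  assert (3/16 * a <= 3 / (4 * PI) * a) by (apply Rmult_le_compat_r; lra).
  lra.
Qed.
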